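(* Let $f \in \mathbb{Z}[x]$ be a polynomial with $f(\mathbb{N}) \subseteq \mathbb{N}$. Then the following two conditions are equivalent: (i) For every prime number $p$, the reduction map $f_p : \mathbb{Z}/p\mathbb{Z} \to \mathbb{Z}/p\mathbb{Z}$, $x \bmod p \mapsto f(x) \bmod p$, is not a cyclic permutation of length $p$ (i.e. it is not a permutation of $\mathbb{Z}/p\mathbb{Z}$ consisting of a single cycle of length $p$). (ii) For any $a, b \in \mathbb{N}$, if $f{\uparrow}_a{\uparrow}_b(n) \to \infty$ in $\mathbb{R}$ as $n \to \infty$, then for every prime number $p$ the limit $\lim_{n \to \infty} f{\uparrow}_a{\uparrow}_b(n)$ exists in the ring $\mathbb{Z}_p$ of $p$-adic integers, and this limit is independent of $b$.
   Context: $\mathbb{N} = \{1,2,3,\dots\}$ denotes the set of positive integers. For a map $g : X \to X$ and $x \in X$, $g^n$ denotes the $n$-th iterate of $g$ and $g{\uparrow}_x : \mathbb{N} \to X$ is the map $n \mapsto g^n(x)$. For $f$ as in the statement and $a \in \mathbb{N}$, $f{\uparrow}_a : \mathbb{N} \to \mathbb{N}$, $n \mapsto f^n(a)$, and $f{\uparrow}_a{\uparrow}_b = (f{\uparrow}_a){\uparrow}_b$, i.e. $f{\uparrow}_a{\uparrow}_b(n) = (f{\uparrow}_a)^n(b)$; equivalently, this is the sequence $y_n$ with $y_0 = b$ and $y_{n+1} = f^{y_n}(a)$. Positive integers are regarded as elements of $\mathbb{Z}_p$ via the natural embedding. *)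

(* Defs.v *)
From HB Require Import structures.
From mathcomp Require Import all_boot all_order all_algebra all_fingroup.
Set Implicit Arguments. Unset Strict Implicit. Unset Printing Implicit Defensive.
Import Order.TTheory GRing.Theory Num.Theory.
Local Open Scope ring_scope.

(* f restricted to the naturals (meaningful on positive integers, where f(N) ⊆ N). *)
Definition fnat (f : {poly int}) (n : nat) : nat := absz f.[n%:Z]%R.

Local Close Scope ring_scope.
Fixpoint iter_seq (f : {poly int}) (a b : nat) (n : nat) : nat :=
  match n with
  | 0 => b
  | m.+1 => iter (iter_seq f a b m) (fnat f) a
  end.

Local Open Scope ring_scope.
Definition red_map (f : {poly int}) (p : nat) (x : 'F_p) : 'F_p :=
  (map_poly (fun z : int => z%:~R : 'F_p) f).[x].

Definition is_full_cycle (f : {poly int}) (p : nat) : Prop :=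
  exists s : {perm 'F_p}, (forall x, s x = red_map f x) /\ #|porbits s| = 1%N.

Local Close Scope ring_scope.

Definition tends_to_infty (x : nat -> nat) : Prop :=
  forall M : nat, exists N, forall n, N <= n -> M <= x n.

(* The p-adic integers as the inverse limit of Z/p^k Z. *)
Definition padic_int (p : nat) :=
  {z : nat -> nat | forall k, z k < p ^ k /\ z k.+1 %% p ^ k = z k}.

Definition padic_lim (p : nat) (x : nat -> nat) (z : padic_int p) : Prop :=
  forall k, exists N, forall n, N <= n -> x n %% p ^ k = sval z k.
Arguments padic_lim : clear implicits.

(* Main.v *)
Require Import Defs.
From mathcomp Require Import all_boot all_order all_algebra all_fingroup.
From mathcomp Require Import zify ring lra.
From Stdlib Require Import IndefiniteDescription ProofIrrelevance FunctionalExtensionality.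
Set Implicit Arguments. Unset Strict Implicit. Unset Printing Implicit Defensive.
Import Order.TTheory GRing.Theory Num.Theory.

Local Open Scope ring_scope.

Lemma poly_congr (q : {poly int}) (x y : int) : (x - y %| q.[x] - q.[y])%Z.
Proof.
elim/poly_ind: q => [|q c IH]; first by rewrite !horner0 subrr dvdz0.
rewrite !hornerMXaddC.
have -> : q.[x]*x + c - (q.[y]*y + c) = (q.[x] - q.[y])*x + q.[y]*(x - y) by ring.
by rewrite rpredD //; [apply: dvdz_mulr | apply: dvdz_mull].
Qed.

Lemma natmod_int (m n M : nat) : (m = n %[mod M])%N <-> (M%:Z %| m%:Z - n%:Z)%Z.
Proof.
rewrite -eqz_mod_dvd !modz_nat; split => [->//|/eqP [] //].
Qed.

Lemma fnatE (f : {poly int})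
  (hf : forall n : nat, (0 < n)%N -> exists m : nat, (0 < m)%N /\ (f.[n%:Z] = m%:Z)%R)
  n : (0 < n)%N -> f.[n%:Z] = (fnat f n)%:Z /\ (0 < fnat f n)%N.
Proof. by move=> /hf [m [m0 e]]; rewrite /fnat e. Qed.

Lemma fnat_mod (f : {poly int})
  (hf : forall n : nat, (0 < n)%N -> exists m : nat, (0 < m)%N /\ (f.[n%:Z] = m%:Z)%R)
  M x y : (0 < x)%N -> (0 < y)%N -> (x = y %[mod M])%N -> (fnat f x = fnat f y %[mod M])%N.
Proof.
move=> x0 y0 /natmod_int h; apply/natmod_int.
have [ex _] := fnatE hf x0; have [ey _] := fnatE hf y0.
rewrite -ex -ey; exact: dvdz_trans h (poly_congr _ _ _).
Qed.

Local Close Scope ring_scope.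
Definition O (f : {poly int}) a r := iter r (fnat f) a.
Definition hfP (f : {poly int}) := forall n : nat, (0 < n)%N -> exists m : nat, (0 < m)%N /\ (f.[n%:Z] = m%:Z)%R.
Definition fmodP (f : {poly int}) := forall M x y, 0 < x -> 0 < y -> x = y %[mod M] -> fnat f x = fnat f y %[mod M].

Lemma fnat_pos f (hf : hfP f) n : 0 < n -> 0 < fnat f n.
Proof. by move=> /hf [m [m0 e]]; rewrite /fnat e. Qed.

Lemma O_pos f (hf : hfP f) a r : 0 < a -> 0 < O f a r.
Proof. by move=> a0; elim: r => //= r IH; apply: fnat_pos. Qed.

Lemma O_shift f (hf : hfP f) (fm : fmodP f) a M i j t : 0 < a ->
  O f a i = O f a j %[mod M] -> O f a (i + t) = O f a (j + t) %[mod M].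
Proof.
move=> a0 h; elim: t => [|t IH]; first by rewrite !addn0.
rewrite !addnS /O /= -/(O f a _) -/(O f a _).
by apply: fm => //; apply: O_pos.
Qed.

Lemma ar1 (r i j u : nat) : i <= j -> i <= r -> r + (j - i + u) = j + (r + u - i).
Proof. lia. Qed.
Lemma ar2 (r i u : nat) : i <= r + u -> i + (r + u - i) = r + u.
Proof. lia. Qed.

Lemma O_per f (hf : hfP f) (fm : fmodP f) a M i j t r : 0 < a -> i <= j -> O f a i = O f a j %[mod M] -> i <= r ->
  O f a (r + (j - i) * t) = O f a r %[mod M].
Proof.
move=> a0 ij h ir; elim: t => [|t IH]; first by rewrite muln0 addn0.
rewrite mulnS; move: IH; set u := (j - i) * t => IH.
have -> : r + (j - i + u) = j + (r + u - i) by apply: ar1.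
rewrite -(O_shift hf fm _ a0 h).
by have -> : i + (r + u - i) = r + u by apply: ar2; apply: leq_trans ir (leq_addr _ _).
Qed.

Lemma O_congr f (hf : hfP f) (fm : fmodP f) a M i j r r' : 0 < a -> i <= j -> O f a i = O f a j %[mod M] -> i <= r -> i <= r' ->
  r = r' %[mod (j - i)] -> O f a r = O f a r' %[mod M].
Proof.
move=> a0 ij h.
wlog rr : r r' / r <= r'.
  move=> W ir ir' e; case: (leqP r r') => c; first exact: W.
  by symmetry; apply: W => //; exact: ltnW.
move=> ir ir' /eqP; rewrite eq_sym (eqn_mod_dvd _ rr) => /divnK dv.
by rewrite -(subnKC rr) -dv mulnC (O_per hf fm _ a0 ij h ir).
Qed.

Lemma surj_inj (T : finType) (g : T -> T) : (forall y, exists x, g x = y) -> injective g.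
Proof.
move=> sg.
have exP y : exists x, g x == y by have [x e] := sg y; exists x; apply/eqP.
pose h y := xchoose (exP y).
have gh y : g (h y) = y by apply/eqP; exact: (xchooseP (exP y)).
have hinj : injective h by exact: can_inj gh.
have [h' hh' h'h] := injF_bij hinj.
have gE x : g x = h' x by rewrite -{1}(h'h x) gh.
by move=> x y; rewrite !gE => /(can_inj h'h).
Qed.

Definition phi (p : nat) (n : nat) : 'F_p := (n%:R)%R.

Lemma red_phi f (hf : hfP f) p n : 0 < n -> red_map f (phi p n) = phi p (fnat f n).
Proof.
move=> n0; rewrite /red_map /phi.
have -> : (n%:R : 'F_p)%R = ((n%:Z)%:~R)%R by [].
rewrite horner_map /=.
have [e _] := fnatE hf n0.
by rewrite e.
Qed.

Lemma phi_mod p n m : prime p -> n = m %[mod p] -> phi p n = phi p m.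
Proof. by move=> pr e; rewrite /phi -(Fp_nat_mod pr) e Fp_nat_mod. Qed.

Lemma full_cycle_of f (hf : hfP f) (fm : fmodP f) a M : 0 < a -> 1 < M ->
  (forall i j, i < j < M -> O f a i %% M != O f a j %% M) ->
  O f a 0 = O f a M %[mod M] -> is_full_cycle f (pdiv M).
Proof.
move=> a0 M1 dist per.
set p := pdiv M.
have pr : prime p by exact: pdiv_prime.
have pM : p %| M by exact: pdiv_dvd.
have M0 : 0 < M by lia.
have perM r : O f a (r + M) = O f a r %[mod M].
  by rewrite addnC -(O_shift hf fm r a0 per) add0n.
have perp r : phi p (O f a (r + M)) = phi p (O f a r).
  by apply: phi_mod => //; rewrite -(modn_dvdm (O f a (r + M)) pM) perM modn_dvdm.
pose g (r : 'I_M) : 'I_M := Ordinal (ltn_pmod (O f a r) M0).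
have ginj : injective g.
  move=> r1 r2 e0; have e : O f a r1 %% M = O f a r2 %% M := congr1 val e0.
  apply/val_inj; apply/eqP; move/eqP: e; apply: contraLR => ne.
  case: (ltngtP r1 r2) ne => // c _.
    by apply: dist; rewrite c ltn_ord.
  by rewrite eq_sym; apply: dist; rewrite c ltn_ord.
have [ginv gK ginvK] := injF_bij ginj.
have cover (x : 'F_p) : exists r, phi p (O f a r) = x.
  have xM : (val x < M)%N.
    apply: leq_trans (ltn_ord x) _; rewrite (Fp_cast pr).
    exact: dvdn_leq.
  exists (ginv (Ordinal xM)); apply/val_inj => /=.
  rewrite /phi val_Fp_nat // -(modn_dvdm (O f a _) pM).
  have := congr1 val (ginvK (Ordinal xM)); rewrite /= => ->.
  by apply: modn_small; rewrite -{2}(Fp_cast pr) ltn_ord.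
have rsurj (x : 'F_p) : exists y, red_map f y = x.
  have [r <-] := cover x.
  exists (phi p (O f a (r + M).-1)).
  rewrite red_phi ?O_pos // -perp.
  have -> : r + M = (r + M).-1.+1 by lia.
  by [].
have rinj := surj_inj rsurj.
exists (perm rinj); split; first by move=> x; rewrite permE.
set s := perm rinj.
have itr r : (s ^+ r)%g (phi p (O f a 0)) = phi p (O f a r).
  rewrite permX; elim: r => // r IH.
  by rewrite iterS IH /s permE red_phi ?O_pos.
have -> : porbits s = [set porbit s (phi p (O f a 0))].
  apply/setP => Y; rewrite inE; apply/imsetP/eqP => [[x _ ->]|->]; last by exists (phi p (O f a 0)).
  by have [r <-] := cover x; rewrite -itr porbit_perm.
by rewrite cards1.
Qed.

Lemma fwd f (hf : hfP f) (fm : fmodP f) (H : forall p, prime p -> ~ is_full_cycle f p) a :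
  0 < a -> forall M, 0 < M -> exists c, forall b, tends_to_infty (iter_seq f a b) ->
  exists N, forall n, N <= n -> iter_seq f a b n %% M = c.
Proof.
move=> a0; elim/ltn_ind => M IH M0.
have [->|M1] : M = 1 \/ 1 < M by lia.
  by exists 0 => b _; exists 0 => n _; rewrite modn1.
have pig : exists i j, [/\ i < j, j <= M & O f a i %% M = O f a j %% M].
  case: (boolP [exists i : 'I_M.+1, exists j : 'I_M.+1, (i < j) && (O f a i %% M == O f a j %% M)]).
    move=> /existsP [i /existsP [j /andP [ij /eqP e]]].
    by exists i, j; split => //; rewrite -ltnS ltn_ord.
  move=> /negP nex; exfalso.
  pose g (r : 'I_M.+1) : 'I_M := Ordinal (ltn_pmod (O f a r) M0).
  have ginj : injective g.
    move=> r1 r2 e0; have e : O f a r1 %% M = O f a r2 %% M := congr1 val e0.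
    apply/val_inj; case: (ltngtP r1 r2) => // c; case: nex.
      by apply/existsP; exists r1; apply/existsP; exists r2; rewrite c e eqxx.
    by apply/existsP; exists r2; apply/existsP; exists r1; rewrite c e eqxx.
  by have := leq_card _ ginj; rewrite !card_ord ltnn.
case: (boolP [exists i : 'I_M.+1, exists j : 'I_M.+1, [&& i < j, j - i < M & O f a i %% M == O f a j %% M]]).
  move=> /existsP [i /existsP [j /and3P [ij dM /eqP e]]].
  set d := j - i.
  have d0 : 0 < d by rewrite /d subn_gt0.
  have [cd Hcd] := IH d dM d0.
  exists (O f a (cd + i * d) %% M) => b ti.
  have [N1 HN1] := Hcd b ti.
  have [N2 HN2] := ti i.
  exists (maxn N1 N2).+1 => -[//|m]; rewrite ltnS geq_max => /andP [h1 h2].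
  change (O f a (iter_seq f a b m) %% M = O f a (cd + i * d) %% M).
  apply: (O_congr hf fm (i:=i) (j:=j) a0) => //.
  - exact: ltnW.
  - exact: HN2.
  - by move: d0; clear; nia.
  - by rewrite addnC modnMDl -(HN1 m h1) modn_mod.
move=> /negP nsm; exfalso.
have [i [j [ij jM e]]] := pig.
have i0 : i = 0.
  case: (posnP i) => // ip; case: nsm.
  have iM : i < M.+1 by lia.
  have jM' : j < M.+1 by lia.
  apply/existsP; exists (Ordinal iM); apply/existsP; exists (Ordinal jM') => /=.
  by rewrite ij e eqxx /=; lia.
have jE : j = M.
  apply/eqP; rewrite eqn_leq jM /=; apply/negP => jlt; case: nsm.
  have iM : i < M.+1 by lia.
  have jM' : j < M.+1 by lia.
  apply/existsP; exists (Ordinal iM); apply/existsP; exists (Ordinal jM') => /=.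
  by rewrite ij e eqxx /=; lia.
subst i j.
have dist : forall i j, i < j < M -> O f a i %% M != O f a j %% M.
  move=> i j /andP [ij2 jM2]; apply/negP => /eqP e2; case: nsm.
  have iM : i < M.+1 by lia.
  have jM' : j < M.+1 by lia.
  apply/existsP; exists (Ordinal iM); apply/existsP; exists (Ordinal jM') => /=.
  by rewrite ij2 e2 eqxx /=; lia.
apply: (H (pdiv M)); first exact: pdiv_prime.
exact: (full_cycle_of hf fm a0 M1 dist e).
Qed.

Local Open Scope ring_scope.

Lemma pinfty_int (q : {poly int}) : 0 < lead_coef q ->
  exists n : int, forall x, n <= x -> lead_coef q <= q.[x].
Proof.
elim/poly_ind: q => [| q c IHq]; first by rewrite lead_coef0 ltxx.
have [->|q_neq0] := eqVneq q 0.
  by rewrite mul0r add0r lead_coefC => c_gt0; exists 0 => x _; rewrite hornerC.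
rewrite lead_coefDl ?size_mulX ?size_polyC // ?lead_coefMX.
  2: by apply: (leq_trans (leq_b1 _)); rewrite size_poly_gt0.
move=> lq_gt0; have [y Hy] := IHq lq_gt0.
exists (Num.max y (1 + `|c|)) => x; rewrite ge_max => /andP[/Hy Hq Hc].
rewrite hornerMXaddC.
have hc : - `|c| <= c by rewrite lerNl ler_normr lexx orbT.
have hq0 : 0 <= q.[x] by lia.
have : q.[x] * (1 + `|c|) <= q.[x] * x by rewrite ler_wpM2l.
nia.
Qed.

Local Close Scope ring_scope.

Lemma growth_int f (hf : hfP f) :
  ~ (forall n, 0 < n -> fnat f n = n) -> ~ (exists C, forall n, 0 < n -> fnat f n = C) ->
  exists X0, 0 < X0 /\ forall x : nat, X0 <= x -> (x%:Z < f.[x%:Z])%R.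
Proof.
move=> nid ncst.
have fE n : 0 < n -> (f.[n%:Z] = (fnat f n)%:Z)%R /\ 0 < fnat f n by apply: fnatE.
case: (leqP (size f) 2) => sz.
  set c0 := (f`_0)%R; set c1 := (f`_1)%R.
  have hE x : (f.[x])%R = (c0 + c1 * x)%R.
    rewrite (horner_coef_wide _ sz) !big_ord_recl big_ord0 /=.
    by rewrite expr0 expr1 mulr1 addr0 mulrC.
  have [c1neg|c1pos] := ltP c1 0%R.
    exfalso; have [e p0] := fE (absz c0).+1 isT.
    move: e; rewrite hE => e; nia.
  have [c10|c1p] := eqVneq c1 0%R.
    case: ncst; exists (absz c0) => n n0; have [e _] := fE n n0.
    move: e; rewrite hE c10 mul0r addr0 => e; lia.
  have [c11|c1n1] := eqVneq c1 1%R.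
    have [e p0] := fE 1 isT; move: e; rewrite hE c11 => e.
    have [c00|c0n] := eqVneq c0 0%R.
      case: nid => n n0; have [e2 _] := fE n n0.
      move: e2; rewrite hE c11 c00 => e2; lia.
    exists 1; split => // x _; rewrite hE c11; lia.
  exists (absz c0).+1; split => // x hx; rewrite hE.
  have : (2 <= c1)%R by lia.
  nia.
have f0 : f != 0%R by rewrite -size_poly_gt0; lia.
have lf : (0 < lead_coef f)%R.
  rewrite lt_def lead_coef_eq0 f0 /=; rewrite leNgt; apply/negP => lneg.
  have := pinfty_int (q := - f); rewrite lead_coefN oppr_gt0 => /(_ lneg) [n Hn].
  have := Hn (Posz (absz n).+1); rewrite hornerN.
  have [e p0] := fE (absz n).+1 isT; rewrite e.
  move=> h; have : (n <= Posz (absz n).+1)%R by lia.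
  move=> /h; move: lneg p0; clear; set L := lead_coef _; set F := fnat _ _; lia.
set g := (f - 'X)%R.
have lg : lead_coef g = lead_coef f.
  by rewrite /g lead_coefDl // size_polyN size_polyX.
have := pinfty_int (q := g); rewrite lg => /(_ lf) [n Hn].
exists (absz n).+1; split => // x hx.
have : (n <= Posz x)%R by lia.
move=> /Hn; rewrite /g hornerD hornerN hornerX; lia.
Qed.

Lemma fc_all (T : finType) (s : {perm T}) x0 : #|porbits s| = 1 -> forall y, y \in porbit s x0.
Proof.
move=> /eqP h0; have [A eA] := cards1P h0; move=> y.
have h1 : porbit s x0 \in porbits s by apply: imset_f.
have h2 : porbit s y \in porbits s by apply: imset_f.
move: h1 h2; rewrite eA !inE => /eqP -> /eqP <-; exact: porbit_id.
Qed.

Lemma iter_mod (T : finType) (s : {perm T}) x r : iter r s x = iter (r %% #|porbit s x|) s x.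
Proof.
rewrite {1}(divn_eq r #|porbit s x|) addnC iterD.
suff -> : iter (r %/ #|porbit s x| * #|porbit s x|) s x = x by [].
elim: (r %/ _) => // k IH; by rewrite mulSn iterD IH iter_porbit.
Qed.

Lemma cyc_mod (T : finType) (s : {perm T}) x r r' :
  iter r s x = iter r' s x -> r = r' %[mod #|porbit s x|].
Proof.
rewrite (iter_mod _ _ r) (iter_mod _ _ r').
have n0 : 0 < #|porbit s x| by rewrite lt0n card_porbit_neq0.
have U := uniq_traject_porbit s x.
rewrite -(nth_traject s (ltn_pmod r n0)) -(nth_traject s (ltn_pmod r' n0)) => e.
by apply/eqP; rewrite -(nth_uniq x _ _ U) ?size_traject ?ltn_pmod // e.
Qed.

Lemma one_two p : prime p -> 1 %% p <> 2 %% p.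
Proof.
move=> pr; have p1 := prime_gt1 pr.
have [->|p2] := eqVneq p 2; first by [].
by rewrite !modn_small //; lia.
Qed.

Lemma phi_eq p n m : prime p -> phi p n = phi p m -> n = m %[mod p].
Proof. by move=> pr e; have := congr1 (@nat_of_ord _) e; rewrite /phi !val_Fp_nat. Qed.

Lemma phi_surj p (x : 'F_p) : prime p -> x = phi p (val x + p).
Proof.
move=> pr; apply/val_inj => /=; rewrite /phi val_Fp_nat // modnDr modn_small //.
by rewrite -{2}(Fp_cast pr) ltn_ord.
Qed.

Lemma fc_props f (hf : hfP f) p : prime p -> is_full_cycle f p ->
  [/\ ~ (forall n, 0 < n -> fnat f n = n),
      ~ (exists C, forall n, 0 < n -> fnat f n = C) &
      forall a, 0 < a -> forall r r', O f a r = O f a r' %[mod p] -> r = r' %[mod p]].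
Proof.
move=> pr [s [sE one]].
have p0 : 0 < p by apply: prime_gt0.
split.
- move=> idf.
  have sid x : s x = x.
    rewrite sE (phi_surj x pr) red_phi ?idf //; lia.
  have := fc_all (phi p 0) one (phi p 1).
  move=> /porbitP [i]; rewrite (permX_fix _ (sid _)) => /(phi_eq pr).
  by rewrite (modn_small (prime_gt1 pr)) mod0n.
- move=> [C hC].
  have : s (phi p 1) = s (phi p 2) by rewrite !sE !red_phi // !hC.
  by move=> /perm_inj /(phi_eq pr) /(one_two pr).
- move=> a a0 r r' e.
  have itr k : iter k s (phi p a) = phi p (O f a k).
    elim: k => // k IH; by rewrite iterS IH sE red_phi // O_pos.
  have := phi_mod pr e; rewrite -!itr => /cyc_mod.
  suff -> : #|porbit s (phi p a)| = p by [].
  transitivity #|'F_p|; last exact: card_Fp pr.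
  by apply: eq_card => y; rewrite fc_all.
Qed.

Lemma back f (hf : hfP f) p a b c N : 0 < a ->
  (forall r r', O f a r = O f a r' %[mod p] -> r = r' %[mod p]) ->
  (forall n, N <= n -> iter_seq f a b n %% p = c) -> b %% p = c.
Proof.
move=> a0 C h.
set u := iter_seq f a b N.
have HU : O f a u %% p = c by exact: (h N.+1).
have Hu : u %% p = c by exact: (h N).
suff K : forall k, k <= N -> iter_seq f a b (N - k) %% p = c.
  by have := K N (leqnn N); rewrite subnn.
move=> k; elim: k => [_|k IH kN]; first by rewrite subn0; exact: h.
have e : N - k = (N - k.+1).+1 by lia.
have h2 := IH (ltnW kN); rewrite e /= -/(O f a _) in h2.
by rewrite (C _ _ (etrans h2 (esym HU))).
Qed.

Theorem theorem1p3 (f : {poly int})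
  (hf : forall n : nat, (0 < n)%N -> exists m : nat, (0 < m)%N /\ (f.[n%:Z] = m%:Z)%R) :
  (forall p : nat, prime p -> ~ is_full_cycle f p) <->
  (forall a b : nat, (0 < a)%N -> (0 < b)%N -> tends_to_infty (iter_seq f a b) ->
     forall p : nat, prime p ->
       exists z : padic_int p, padic_lim p (iter_seq f a b) z /\
         forall b' : nat, (0 < b')%N -> tends_to_infty (iter_seq f a b') ->
           forall z' : padic_int p, padic_lim p (iter_seq f a b') z' -> z' = z).
Proof.
have fm : fmodP f := fun M x y => @fnat_mod f hf M x y.
split.
  move=> H a b a0 b0 ti p pr.
  have F := fwd hf fm H a0.
  have pk0 k : 0 < p ^ k by rewrite expn_gt0 prime_gt0.
  pose cf k := proj1_sig (constructive_indefinite_description _ (F (p ^ k) (pk0 k))).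
  have spec k : forall b, tends_to_infty (iter_seq f a b) ->
      exists N, forall n, N <= n -> iter_seq f a b n %% p ^ k = cf k.
    exact: (proj2_sig (constructive_indefinite_description _ (F (p ^ k) (pk0 k)))).
  have pz k : cf k < p ^ k /\ cf k.+1 %% p ^ k = cf k.
    have [N1 h1] := spec k b ti; have [N2 h2] := spec k.+1 b ti.
    rewrite -(h1 (maxn N1 N2)) ?leq_maxl // -(h2 (maxn N1 N2)) ?leq_maxr //.
    split; first exact: ltn_pmod.
    by rewrite (modn_dvdm _ (dvdn_exp2l p (leqnSn k))).
  exists (exist _ cf pz); split.
    by move=> k; exact: spec.
  move=> b' b0' ti' [g pg] lim'.
  have gE : g = cf.
    apply: functional_extensionality => k.
    have [N1 h1] := lim' k; have [N2 h2] := spec k b' ti'; simpl in h1.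
    by rewrite -(h1 (maxn N1 N2)) ?leq_maxl // -(h2 (maxn N1 N2)) ?leq_maxr.
  subst g; f_equal; apply: proof_irrelevance.
move=> H2 p pr fc.
have [nid ncst C] := fc_props hf pr fc.
have [X0 [X00 gX]] := growth_int hf nid ncst.
have gr x : X0 <= x -> x < fnat f x.
  move=> hx; have := gX x hx; have [e _] := fnatE hf (leq_trans X00 hx).
  by rewrite e; lia.
have Oge r : X0 + r <= O f X0 r.
  elim: r => [|r IH]; first by rewrite addn0.
  rewrite addnS /= -/(O f X0 r); apply: leq_trans (gr _ _); first by rewrite ltnS.
  by apply: leq_trans IH; apply: leq_addr.
have ti b : tends_to_infty (iter_seq f X0 b).
  have hn n : n <= iter_seq f X0 b n.
    elim: n => // n IH; rewrite /= -/(O f X0 _).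
    by apply: leq_trans (Oge _); lia.
  by move=> M; exists M => n hn'; apply: leq_trans hn' (hn n).
have CX := C X0 X00.
have [z [lz uz]] := H2 X0 1 X00 isT (ti 1) p pr.
have [z2 [lz2 _]] := H2 X0 2 X00 isT (ti 2) p pr.
have ez := uz 2 isT (ti 2) z2 lz2.
have [N1 h1] := lz 1; have [N2 h2] := lz2 1.
rewrite expn1 in h1 h2.
have e1 := back hf X00 CX h1.
have e2 := back hf X00 CX h2.
rewrite ez in e2.
by apply: (one_two pr); rewrite e1 e2.
Qed.
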